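(* Fix an instance and a feasible schedule $S$ (e.g. an optimum schedule) with $|S|$ scheduled jobs. With respect to the random hierarchical decomposition (random offset $r_0$ uniform in $[0,T/q]$), the expected number of jobs of $S$ that are position-crossing is at most $\frac{1}{q}|S|=O(\varepsilon^2|S|)$.
   Context: Jobs $j$ have integer release time $r_j$, deadline $d_j$ and processing time $p_j$ in $[0,T]$. Fix $\varepsilon>0$ with $q=1/\varepsilon^2$ an integer, $k=\log_q T$ (assume $T$ is a power of $q$), and $\ell_i=T/q^{i+1}$ for $i\ge0$. Random hierarchical decomposition: pick $r_0$ uniformly at random in $[0,T/q]$; for each $0\le i\le k$, the partition $I_i$ of $[0,T]$ consists of the intervals between consecutive points of $\{0,T\}\cup(\{r_0+s\ell_i:s\in\mathbb{Z}\}\cap(0,T))$. In a schedule, a job $j$ occupies its position, the interval $[s_j,s_j+p_j]$ where $s_j$ is its start time. A scheduled job $j$ is position-crossing if $\ell_i\le p_j<\ell_{i-1}$ for some $2\le i\le k+1$ and its position intersects (in a set of positive length) more than one interval of $I_{i-2}$. *)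

(* Defs.v *)
From Stdlib Require Import Reals Lra List ClassicalEpsilon.
Import ListNotations.
Open Scope R_scope.

Record Job := mkJob { rel : nat; dl : nat; pt : nat }.

(* A scheduled job: a job together with its start time s_j. *)
Definition SJob := (Job * R)%type.

Definition sjob_feasible (T : nat) (js : SJob) : Prop :=
  let (j, s) := js in
  (rel j <= T)%nat /\ (dl j <= T)%nat /\ (pt j <= T)%nat /\
  INR (rel j) <= s /\ s + INR (pt j) <= INR (dl j).

Definition ell (q T : nat) (i : nat) : R := INR T / (INR q ^ (S i)).

Definition part_point (q T : nat) (i : nat) (r0 : R) (x : R) : Prop :=
  x = 0 \/ x = INR T \/
  (0 < x < INR T /\ exists s : Z, x = r0 + IZR s * ell q T i).

Definition part_interval (q T : nat) (i : nat) (r0 : R) (a b : R) : Prop :=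
  part_point q T i r0 a /\ part_point q T i r0 b /\ a < b /\
  (forall x, a < x < b -> ~ part_point q T i r0 x).

Definition pos_overlap (s p a b : R) : Prop :=
  Rmax s a < Rmin (s + p) b.

Definition position_crossing (q k T : nat) (r0 : R) (js : SJob) : Prop :=
  let (j, s) := js in
  let p := INR (pt j) in
  exists i : nat, (2 <= i <= k + 1)%nat /\
    ell q T i <= p < ell q T (i - 1) /\
    exists a1 b1 a2 b2 : R,
      part_interval q T (i - 2) r0 a1 b1 /\
      part_interval q T (i - 2) r0 a2 b2 /\
      (a1, b1) <> (a2, b2) /\
      pos_overlap s p a1 b1 /\ pos_overlap s p a2 b2.

Definition ind (P : Prop) : R :=
  if excluded_middle_informative P then 1 else 0.

Definition num_crossing (q k T : nat) (S : list SJob) (r0 : R) : R :=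
  fold_right (fun js acc => ind (position_crossing q k T r0 js) + acc) 0 S.

(* Main.v *)
Require Import Defs.
From Stdlib Require Import Reals Lra Lia List ZArith ClassicalEpsilon.
From Coquelicot Require Import Coquelicot.
Open Scope R_scope.
Notation ind := Defs.ind.

Lemma ind_T (P : Prop) : P -> ind P = 1.
Proof. intros H; unfold ind; destruct (excluded_middle_informative P); tauto. Qed.
Lemma ind_F (P : Prop) : ~ P -> ind P = 0.
Proof. intros H; unfold ind; destruct (excluded_middle_informative P); tauto. Qed.

Lemma RInt_constR (a b c : R) : RInt (fun _ => c) a b = (b - a) * c.
Proof. exact (RInt_const a b c). Qed.

Lemma RChasles (f : R -> R) a b c : ex_RInt f a b -> ex_RInt f b c ->
  RInt f a b + RInt f b c = RInt f a c.
Proof. intros H1 H2. exact (RInt_Chasles f a b c H1 H2). Qed.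

Lemma const_piece (f : R -> R) a b c : a <= b ->
  (forall x, a < x < b -> f x = c) -> ex_RInt f a b /\ RInt f a b = (b - a) * c.
Proof.
  intros hab H. split.
  - apply (ex_RInt_ext (fun _ => c)). 2: apply ex_RInt_const.
    intros x Hx. rewrite Rmin_left in Hx by lra. rewrite Rmax_right in Hx by lra.
    symmetry; apply H; lra.
  - rewrite <- RInt_constR. apply RInt_ext.
    intros x Hx. rewrite Rmin_left in Hx by lra. rewrite Rmax_right in Hx by lra.
    apply H; lra.
Qed.

Lemma ind_interval (u v a b : R) : a <= b ->
  ex_RInt (fun r => ind (u < r < v)) a b /\
  RInt (fun r => ind (u < r < v)) a b = Rmax 0 (Rmin v b - Rmax u a).
Proof.
  intros hab.
  set (x1 := Rmax a (Rmin u b)). set (x2 := Rmax x1 (Rmin v b)).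
  assert (h1 : a <= x1 <= b).
  { unfold x1, Rmax, Rmin; repeat destruct Rle_dec; lra. }
  assert (h2 : x1 <= x2 <= b).
  { unfold x2, Rmax, Rmin in *; repeat destruct Rle_dec; lra. }
  destruct (const_piece (fun r => ind (u < r < v)) a x1 0) as [E1 I1]; [lra| |].
  { intros x Hx. apply ind_F. unfold x1, Rmax, Rmin in *; repeat destruct Rle_dec; lra. }
  destruct (const_piece (fun r => ind (u < r < v)) x1 x2 1) as [E2 I2]; [lra| |].
  { intros x Hx. apply ind_T. unfold x2, x1, Rmax, Rmin in *; repeat destruct Rle_dec; lra. }
  destruct (const_piece (fun r => ind (u < r < v)) x2 b 0) as [E3 I3]; [lra| |].
  { intros x Hx. apply ind_F. unfold x2, x1, Rmax, Rmin in *; repeat destruct Rle_dec; lra. }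
  split.
  - apply (ex_RInt_Chasles _ a x2); [apply (ex_RInt_Chasles _ a x1)|]; auto.
  - rewrite <- (RChasles _ a x2 b); [|apply (ex_RInt_Chasles _ a x1)|]; auto.
    rewrite <- (RChasles _ a x1 x2); auto.
    rewrite I1, I2, I3. unfold x2, x1, Rmax, Rmin in *; repeat destruct Rle_dec; lra.
Qed.
Definition Fg (L s p : R) (r : R) := ind (exists m : Z, s < r + IZR m * L < s + p).

Lemma period_int (L s p a : R) : 0 < L -> 0 < p < L ->
  ex_RInt (Fg L s p) a (a + L) /\ RInt (Fg L s p) a (a + L) = p.
Proof.
  intros hL hp.
  set (z := (up ((s - a) / L) - 1)%Z).
  assert (hz : IZR z <= (s - a) / L < IZR z + 1).
  { unfold z. rewrite minus_IZR. destruct (archimed ((s - a) / L)). simpl. lra. }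
  set (c := s - IZR z * L).
  assert (hc : a <= c < a + L).
  { unfold c. destruct hz as [hz1 hz2].
    apply (Rmult_le_compat_r L) in hz1; [|lra].
    apply (Rmult_lt_compat_r L) in hz2; [|lra].
    unfold Rdiv in *. rewrite Rmult_assoc, Rinv_l in hz1, hz2 by lra. lra. }
  assert (Heq : forall r, a < r < a + L ->
     Fg L s p r = ind (c < r < c + p) + ind (c - L < r < c + p - L)).
  { intros r hr. unfold Fg.
    destruct (Rlt_dec c r) as [h1|h1]; destruct (Rlt_dec r (c + p)) as [h2|h2].
    - rewrite (ind_T (c < r < c+p)) by lra. rewrite (ind_F (c - L < r < _)) by lra.
      rewrite ind_T; [lra|]. exists z. unfold c in *. lra.
    - rewrite (ind_F (c < r < c+p)) by lra. rewrite (ind_F (c - L < r < _)) by lra.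
      rewrite ind_F; [lra|]. intros [m hm].
      assert (hk : (IZR m - IZR z) * L < 0 /\ - L < (IZR m - IZR z) * L).
      { unfold c in *. split; nra. }
      destruct hk as [hk1 hk2].
      assert (IZR m - IZR z < 0) by (apply (Rmult_lt_reg_r L); lra).
      assert (-1 < IZR m - IZR z) by (apply (Rmult_lt_reg_r L); lra).
      rewrite <- minus_IZR in *. apply lt_IZR in H. apply lt_IZR in H0. lia.
    -
      destruct (Rlt_dec (c - L) r) as [h3|h3]; destruct (Rlt_dec r (c + p - L)) as [h4|h4].
      + rewrite (ind_F (c < r < c+p)) by lra. rewrite (ind_T (c - L < r < _)) by lra.
        rewrite ind_T; [lra|]. exists (z + 1)%Z. rewrite plus_IZR. unfold c in *. lra.
      + rewrite (ind_F (c < r < c+p)) by lra. rewrite (ind_F (c - L < r < _)) by lra.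
        rewrite ind_F; [lra|]. intros [m hm].
        assert (hk : (IZR m - IZR z) * L < L /\ 0 < (IZR m - IZR z) * L).
        { unfold c in *. split; nra. }
        destruct hk as [hk1 hk2].
        assert (IZR m - IZR z < 1) by (apply (Rmult_lt_reg_r L); lra).
        assert (0 < IZR m - IZR z) by (apply (Rmult_lt_reg_r L); lra).
        rewrite <- minus_IZR in *. apply lt_IZR in H. apply lt_IZR in H0. lia.
      + lra.
      + lra.
    - lra. }
  destruct (ind_interval c (c + p) a (a + L)) as [E1 I1]; [lra|].
  destruct (ind_interval (c - L) (c + p - L) a (a + L)) as [E2 I2]; [lra|].
  assert (E : ex_RInt (fun r => ind (c < r < c + p) + ind (c - L < r < c + p - L)) a (a + L)).
  { exact (ex_RInt_plus _ _ a (a+L) E1 E2). }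
  split.
  - apply (ex_RInt_ext _ _ a (a+L)) with (2 := E).
    intros x Hx. rewrite Rmin_left in Hx by lra. rewrite Rmax_right in Hx by lra.
    symmetry; apply Heq; lra.
  - rewrite (RInt_ext _ (fun r => ind (c < r < c + p) + ind (c - L < r < c + p - L))).
    2: { intros x Hx. rewrite Rmin_left in Hx by lra. rewrite Rmax_right in Hx by lra.
         apply Heq; lra. }
    assert (HP : RInt (fun r => ind (c < r < c + p) + ind (c - L < r < c + p - L)) a (a + L)
       = RInt (fun r => ind (c < r < c + p)) a (a + L) + RInt (fun r => ind (c - L < r < c + p - L)) a (a + L))
      by exact (RInt_plus _ _ a (a+L) E1 E2).
    rewrite HP.
    rewrite I1, I2. unfold Rmax, Rmin; repeat destruct Rle_dec; lra.
Qed.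

Lemma periods_int (L s p : R) (N : nat) : 0 < L -> 0 < p < L ->
  ex_RInt (Fg L s p) 0 (INR N * L) /\ RInt (Fg L s p) 0 (INR N * L) = INR N * p.
Proof.
  intros hL hp. induction N as [|N [IH1 IH2]].
  - simpl. rewrite !Rmult_0_l. split; [apply ex_RInt_point|]. exact (RInt_point 0 _).
  - rewrite S_INR. replace ((INR N + 1) * L) with (INR N * L + L) by ring.
    destruct (period_int L s p (INR N * L) hL hp) as [E I].
    split.
    + exact (ex_RInt_Chasles _ _ _ _ IH1 E).
    + rewrite <- (RChasles _ _ _ _ IH1 E). rewrite IH2, I. lra.
Qed.
Lemma int_between (m m' : Z) (L : R) : 0 < L ->
  (IZR m - 1) * L < IZR m' * L -> IZR m' * L < IZR m * L -> False.
Proof.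
  intros hL h1 h2.
  assert (IZR m - 1 < IZR m') by (apply (Rmult_lt_reg_r L); lra).
  assert (IZR m' < IZR m) by (apply (Rmult_lt_reg_r L); lra).
  replace (IZR m - 1) with (IZR (m - 1)) in H by (rewrite minus_IZR; reflexivity).
  apply lt_IZR in H. apply lt_IZR in H0. lia.
Qed.

Lemma interval_disj q T l r0 a1 b1 a2 b2 :
  part_interval q T l r0 a1 b1 -> part_interval q T l r0 a2 b2 -> a1 < a2 -> b1 <= a2.
Proof.
  intros [_ [_ [h1 H1]]] [p2 _] hlt.
  destruct (Rle_dec b1 a2) as [h|h]; [auto|].
  exfalso. apply (H1 a2); [lra | exact p2].
Qed.

Lemma cross_iff q T l r0 s p :
  0 <= s -> s + p <= INR T -> 0 < ell q T l ->
  ((exists a1 b1 a2 b2 : R,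
      part_interval q T l r0 a1 b1 /\
      part_interval q T l r0 a2 b2 /\
      (a1, b1) <> (a2, b2) /\
      pos_overlap s p a1 b1 /\ pos_overlap s p a2 b2)
   <-> exists m : Z, s < r0 + IZR m * ell q T l < s + p).
Proof.
  intros hs hsp hL. set (L := ell q T l) in *. split.
  - intros (a1 & b1 & a2 & b2 & P1 & P2 & hne & O1 & O2).
    unfold pos_overlap in O1, O2.
    assert (g : forall x, part_point q T l r0 x -> s < x < s + p ->
               exists m : Z, s < r0 + IZR m * L < s + p).
    { intros x [hx|[hx|[hx [m hm]]]] hx2; [lra|lra|]. exists m. fold L in hm. lra. }
    assert (Ha1 := Rmax_l s a1). assert (Ha1' := Rmax_r s a1).
    assert (Hb1 := Rmin_l (s+p) b1). assert (Hb1' := Rmin_r (s+p) b1).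
    assert (Ha2 := Rmax_l s a2). assert (Ha2' := Rmax_r s a2).
    assert (Hb2 := Rmin_l (s+p) b2). assert (Hb2' := Rmin_r (s+p) b2).
    destruct (Rtotal_order a1 a2) as [h|[h|h]].
    + assert (b1 <= a2) by exact (interval_disj _ _ _ _ _ _ _ _ P1 P2 h).
      apply (g b1); [apply P1|lra].
    + exfalso. subst a2. apply hne. f_equal.
      destruct P1 as [_ [q1 [_ H1]]]. destruct P2 as [_ [q2 [_ H2]]].
      destruct (Rtotal_order b1 b2) as [h|[h|h]]; auto.
      * exfalso. apply (H2 b1); [lra|auto].
      * exfalso. apply (H1 b2); [lra|auto].
    + assert (b2 <= a1) by exact (interval_disj _ _ _ _ _ _ _ _ P2 P1 h).
      apply (g b2); [apply P2|lra].
  - intros [m hm]. set (x := r0 + IZR m * L) in *.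
    assert (px : part_point q T l r0 x).
    { right; right. split; [lra|]. exists m. reflexivity. }
    set (a1 := Rmax 0 (x - L)). set (b2 := Rmin (INR T) (x + L)).
    assert (pa1 : part_point q T l r0 a1).
    { unfold a1, Rmax. destruct Rle_dec.
      - destruct (Req_dec (x - L) 0) as [e|e]; [left; lra|].
        right; right. split; [lra|]. exists (m - 1)%Z. rewrite minus_IZR. fold L. unfold x. ring.
      - left; reflexivity. }
    assert (pb2 : part_point q T l r0 b2).
    { unfold b2, Rmin. destruct Rle_dec.
      - right; left; reflexivity.
      - right; right. split; [lra|]. exists (m + 1)%Z. rewrite plus_IZR. fold L. unfold x. ring. }
    assert (ha1 : a1 < x) by (unfold a1, Rmax; destruct Rle_dec; lra).
    assert (hb2 : x < b2) by (unfold b2, Rmin; destruct Rle_dec; lra).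
    exists a1, x, x, b2. split; [|split; [|split; [|split]]].
    + split; [auto|split; [auto|split; [auto|]]].
      intros y hy [hy0|[hyT|[hy' [m' hm']]]]; [unfold a1 in *; pose proof (Rmax_l 0 (x-L)); lra|lra|].
      fold L in hm'. assert (Rmax_r' := Rmax_r 0 (x - L)). fold a1 in Rmax_r'.
      apply (int_between m m' L hL); unfold x in *; lra.
    + split; [auto|split; [auto|split; [auto|]]].
      intros y hy [hy0|[hyT|[hy' [m' hm']]]]; [lra|unfold b2 in *; pose proof (Rmin_l (INR T) (x+L)); lra|].
      fold L in hm'. assert (Rmin_r' := Rmin_r (INR T) (x + L)). fold b2 in Rmin_r'.
      apply (int_between (m + 1) m' L hL); rewrite plus_IZR; unfold x in *; lra.
    + intros He. injection He. lra.
    + unfold pos_overlap. apply Rmax_lub_lt; apply Rmin_glb_lt; lra.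
    + unfold pos_overlap. apply Rmax_lub_lt; apply Rmin_glb_lt; lra.
Qed.
Lemma ell_S q T n : (1 <= q)%nat -> ell q T (S n) = ell q T n / INR q.
Proof.
  intros hq. assert (0 < INR q) by (apply lt_0_INR; lia).
  unfold ell. change (INR q ^ S (S n)) with (INR q * INR q ^ S n).
  assert (0 < INR q ^ S n) by (apply pow_lt; lra). field. lra.
Qed.

Lemma ell_pos q T n : (1 <= q)%nat -> 0 < INR T -> 0 < ell q T n.
Proof.
  intros hq hT. assert (0 < INR q) by (apply lt_0_INR; lia).
  unfold ell. apply Rdiv_lt_0_compat; [lra|apply pow_lt; lra].
Qed.

Lemma ell_mono q T n d : (1 <= q)%nat -> 0 < INR T -> ell q T (d + n) <= ell q T n.
Proof.
  intros hq hT. assert (1 <= INR q) by (apply (le_INR 1); lia).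
  induction d as [|d IH]; [simpl; lra|].
  change (S d + n)%nat with (S (d + n)). rewrite ell_S by auto.
  assert (0 < ell q T (d + n)) by (apply ell_pos; auto).
  apply Rle_trans with (2 := IH). unfold Rdiv.
  apply Rmult_le_reg_r with (INR q); [lra|].
  rewrite Rmult_assoc, Rinv_l by lra. nra.
Qed.

Lemma ell0_eq q T l : (1 <= q)%nat -> ell q T 0 = INR (q ^ l) * ell q T l.
Proof.
  intros hq. assert (0 < INR q) by (apply lt_0_INR; lia).
  induction l as [|l IH]; [simpl; lra|].
  rewrite ell_S by auto. rewrite IH. change (q ^ S l)%nat with (q * q ^ l)%nat.
  rewrite mult_INR. field. lra.
Qed.

Lemma ind_iff (P Q : Prop) : (P <-> Q) -> ind P = ind Q.
Proof.
  intros H. unfold Defs.ind.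
  destruct (excluded_middle_informative P); destruct (excluded_middle_informative Q); tauto.
Qed.

Lemma job_int q k T (hq : (1 <= q)%nat) (hT : 0 < INR T) j s :
  sjob_feasible T (j, s) ->
  ex_RInt (fun r0 => ind (position_crossing q k T r0 (j, s))) 0 (ell q T 0) /\
  RInt (fun r0 => ind (position_crossing q k T r0 (j, s))) 0 (ell q T 0) <= ell q T 0 / INR q.
Proof.
  intros [_ [hd [_ [hr hsd]]]].
  assert (hqp : 1 <= INR q) by (apply (le_INR 1); lia).
  set (p := INR (pt j)) in *.
  assert (hs : 0 <= s) by (pose proof (pos_INR (rel j)); lra).
  assert (hsp : s + p <= INR T) by (apply le_INR in hd; lra).
  assert (hl0 : 0 < ell q T 0) by (apply ell_pos; auto).
  destruct (classic (exists i, (2 <= i <= k + 1)%nat /\ ell q T i <= p /\ p < ell q T (i - 1)))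
    as [[i0 [hi [h1 h2]]] | hno].
  - set (l := (i0 - 2)%nat). set (L := ell q T l).
    assert (hL : 0 < L) by (apply ell_pos; auto).
    assert (hi1 : (i0 - 1 = S l)%nat) by (unfold l; lia).
    assert (hi0 : (i0 = S (S l))%nat) by (unfold l; lia).
    assert (hpL : p < L / INR q) by (rewrite hi1, ell_S in h2 by auto; exact h2).
    assert (hp0 : 0 < p) by (pose proof (ell_pos q T i0 hq hT); lra).
    assert (hLq : L / INR q <= L).
    { unfold Rdiv. apply Rmult_le_reg_r with (INR q); [lra|].
      rewrite Rmult_assoc, Rinv_l by lra. nra. }
    assert (Heq : forall r0, ind (position_crossing q k T r0 (j, s)) = Fg L s p r0).
    { intros r0. unfold Fg. apply ind_iff. unfold position_crossing.
      cbv beta iota zeta. fold p. split.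
      - intros [i [hi' [[hc1 hc2] rest]]].
        assert (i = i0).
        { destruct (Nat.lt_total i i0) as [h|[h|h]]; auto; exfalso.
          - pose proof (ell_mono q T i (i0 - 1 - i) hq hT).
            replace (i0 - 1 - i + i)%nat with (i0 - 1)%nat in H by lia. lra.
          - pose proof (ell_mono q T i0 (i - 1 - i0) hq hT).
            replace (i - 1 - i0 + i0)%nat with (i - 1)%nat in H by lia. lra. }
        subst i. apply (cross_iff q T l r0 s p hs hsp hL). exact rest.
      - intros hm. exists i0. split; [auto|split; [split; auto|]].
        apply (cross_iff q T l r0 s p hs hsp hL). exact hm. }
    destruct (periods_int L s p (q ^ l) hL ltac:(lra)) as [E I].
    assert (e0 : INR (q ^ l) * L = ell q T 0) by (rewrite (ell0_eq q T l hq); reflexivity).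
    rewrite e0 in E, I.
    split.
    + apply (ex_RInt_ext (Fg L s p)); [intros; symmetry; apply Heq|exact E].
    + rewrite (RInt_ext _ (Fg L s p)) by (intros; apply Heq). rewrite I.
      rewrite <- e0.
      assert (0 <= INR (q ^ l)) by apply pos_INR.
      unfold Rdiv in *. rewrite Rmult_assoc. apply Rmult_le_compat_l; lra.
  - assert (Hz : forall r0, ind (position_crossing q k T r0 (j, s)) = 0).
    { intros r0. apply ind_F. unfold position_crossing. cbv beta iota zeta. fold p.
      intros [i [hi [[h1 h2] _]]]. apply hno. exists i. auto. }
    destruct (const_piece (fun r0 => ind (position_crossing q k T r0 (j, s))) 0 (ell q T 0) 0)
      as [E I]; [lra|intros; apply Hz|].
    split; [exact E|]. rewrite I. rewrite Rmult_0_r.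
    apply Rdiv_le_0_compat; lra.
Qed.
Lemma all_int q k T (hq : (1 <= q)%nat) (hT : 0 < INR T) (S : list SJob) :
  (forall js, In js S -> sjob_feasible T js) ->
  ex_RInt (num_crossing q k T S) 0 (ell q T 0) /\
  RInt (num_crossing q k T S) 0 (ell q T 0) <= INR (length S) * (ell q T 0 / INR q).
Proof.
  induction S as [|[j s] S IH]; intros hS.
  - simpl. destruct (const_piece (num_crossing q k T nil) 0 (ell q T 0) 0) as [E I].
    + pose proof (ell_pos q T 0 hq hT); lra.
    + intros; reflexivity.
    + split; [exact E|]. rewrite I. lra.
  - destruct IH as [E1 I1]; [intros; apply hS; right; auto|].
    destruct (job_int q k T hq hT j s) as [E2 I2]; [apply hS; left; auto|].
    assert (Ef : forall r0, num_crossing q k T ((j, s) :: S) r0 =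
       ind (position_crossing q k T r0 (j, s)) + num_crossing q k T S r0) by reflexivity.
    assert (E : ex_RInt (fun r0 => ind (position_crossing q k T r0 (j, s)) + num_crossing q k T S r0) 0 (ell q T 0))
      by exact (ex_RInt_plus _ _ _ _ E2 E1).
    assert (HP : RInt (fun r0 => ind (position_crossing q k T r0 (j, s)) + num_crossing q k T S r0) 0 (ell q T 0)
       = RInt (fun r0 => ind (position_crossing q k T r0 (j, s))) 0 (ell q T 0) + RInt (num_crossing q k T S) 0 (ell q T 0))
      by exact (RInt_plus _ _ _ _ E2 E1).
    split.
    + apply (ex_RInt_ext _ _ _ _ (fun x _ => eq_sym (Ef x)) E).
    + rewrite (RInt_ext _ _ _ _ (fun x _ => Ef x)). rewrite HP.
      change (length ((j, s) :: S)) with (Datatypes.S (length S)). rewrite S_INR. lra.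
Qed.

Theorem mainTheorem7 (q k T : nat) (hq : (1 <= q)%nat) (hT : T = (q ^ k)%nat)
  (S : list SJob) (hS : forall js, In js S -> sjob_feasible T js) :
  exists pr : Riemann_integrable (num_crossing q k T S) 0 (INR T / INR q),
    RiemannInt pr / (INR T / INR q) <= INR (length S) / INR q.
Proof.
  assert (hqp : 1 <= INR q) by (apply (le_INR 1); lia).
  assert (hTp : 0 < INR T).
  { subst T. rewrite pow_INR. apply pow_lt. lra. }
  assert (e0 : ell q T 0 = INR T / INR q) by (unfold ell; simpl; rewrite Rmult_1_r; reflexivity).
  destruct (all_int q k T hq hTp S hS) as [E I]. rewrite e0 in E, I.
  exists (ex_RInt_Reals_0 _ _ _ E). rewrite <- RInt_Reals.
  assert (0 < INR T / INR q) by (apply Rdiv_lt_0_compat; lra).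
  apply (Rmult_le_reg_r (INR T / INR q)); [auto|].
  unfold Rdiv at 1. rewrite Rmult_assoc, Rinv_l by lra. rewrite Rmult_1_r.
  replace (INR (length S) / INR q * (INR T / INR q)) with (INR (length S) * (INR T / INR q / INR q))
    by (field; lra).
  exact I.
Qed.
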